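(* Let $A\in\mathbb{C}^{n\times n}$ and $m\in\mathbb{N}=\{1,2,\dots\}$. Then $AA^{\#_m}A=A$ if and only if $\mathrm{Ind}(A)\le 1$.
   Context: For $A\in\mathbb{C}^{n\times n}$: $A^\dagger$ Moore–Penrose inverse, $P_A=AA^\dagger$, $\mathcal{R}(\cdot)$ column space. The index $\mathrm{Ind}(A)$ is the smallest nonnegative integer $k$ with $\mathcal{R}(A^k)=\mathcal{R}(A^{k+1})$ ($A^0=I_n$). The core-EP inverse $A^{\mathrm{cEP}}$ is the unique $X$ with $XAX=X$ and $\mathcal{R}(X)=\mathcal{R}(X^* )=\mathcal{R}(A^k)$. For $m\in\mathbb{N}$, the $m$-weak group inverse is $A^{\mathrm{WG}_m}:=(A^{\mathrm{cEP}})^{m+1}A^m$ and the $m$-weak core inverse is $A^{\#_m}:=A^{\mathrm{WG}_m}P_{A^m}$. *)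

(* Defs.v *)
(* The complex numbers are modelled as R[i] = complex R for an
   arbitrary R : realType (complete archimedean ordered field, i.e. the reals). *)
From HB Require Import structures.
From mathcomp Require Import all_boot all_order all_algebra.
From mathcomp Require Import reals complex.
Set Implicit Arguments. Unset Strict Implicit. Unset Printing Implicit Defensive.
Import Order.TTheory GRing.Theory Num.Theory.
Local Open Scope ring_scope.

Section Defs.
Variable (C : numClosedFieldType) (n : nat).
Implicit Types A X : 'M[C]_n.

Definition ctmx A : 'M[C]_n := (map_mx Num.conj A)^T.

(* column space equality R(A) = R(B): row spaces of the transposes *)
Definition colspace_eq A (B : 'M[C]_n) : bool := (A^T == B^T)%MS.

Definition is_MP A X : Prop :=
  [/\ A *m X *m A = A, X *m A *m X = X,
      ctmx (A *m X) = A *m X & ctmx (X *m A) = X *m A].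

(* Ind(A): smallest k with R(A^k) = R(A^(k+1)), A^0 = I.  The column spaces
   stabilise at some k <= n, so searching k in 0..n finds the minimum. *)
Definition Ind A : nat :=
  find (fun k => colspace_eq (A ^+ k) (A ^+ k.+1)) (iota 0 n.+1).

Definition is_coreEP A X : Prop :=
  [/\ X *m A *m X = X, colspace_eq X (A ^+ Ind A)
    & colspace_eq (ctmx X) (A ^+ Ind A)].

(* given the core-EP inverse E of A and the MP inverse M of A^m:
   m-weak group inverse  (E^(m+1)) A^m  and m-weak core inverse  WG_m * P_{A^m} *)
Definition WGm (E : 'M[C]_n) A (m : nat) : 'M[C]_n := E ^+ m.+1 *m A ^+ m.
Definition weak_core (E M : 'M[C]_n) A (m : nat) : 'M[C]_n :=
  WGm E A m *m (A ^+ m *m M).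

End Defs.

(* Main.v *)
Require Import Defs.
From HB Require Import structures.
From mathcomp Require Import all_boot all_order all_algebra.
From mathcomp Require Import reals complex.
Import Order.TTheory GRing.Theory Num.Theory.
Local Open Scope ring_scope.

Section Aux.
Variables (C : fieldType) (n : nat).
Implicit Types A B : 'M[C]_n.

Lemma col_sub A B : (A^T <= B^T)%MS -> exists D, A = B * D.
Proof.
move/submxP=> [D HD]; exists D^T.
by rewrite -mulmxE -[A]trmxK HD trmx_mul trmxK.
Qed.

Lemma col_subW A B D : A = B * D -> (A^T <= B^T)%MS.
Proof. by move=> ->; rewrite -mulmxE trmx_mul submxMl. Qed.
End Aux.

Lemma find_le1 (p : pred nat) n : p 1%N -> (find p (iota 0 n.+1) <= 1)%N.
Proof. by case: n => [|n] /= p1; case: (p 0%N) => //=; rewrite p1. Qed.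


Lemma find_le1_inv (p : pred nat) n : (find p (iota 0 n.+2) <= 1)%N ->
  (p 0%N /\ find p (iota 0 n.+2) = 0%N) \/ (p 1%N /\ find p (iota 0 n.+2) = 1%N).
Proof. by rewrite /=; case: (p 0%N) => /=; [left|case: (p 1%N) => //; right]. Qed.

Lemma fwd (Rg : pzRingType) (A E M Q T : Rg) m : (0 < m)%N ->
  E * A * E = E -> A ^+ m * M * A ^+ m = A ^+ m -> A = E * Q -> A = A * A * T ->
  A * (E ^+ m.+1 * A ^+ m * (A ^+ m * M)) * A = A.
Proof.
move=> m0 HEAE HM HQ HT.
have EAA : E * A * A = A by rewrite {2}HQ mulrA HEAE -HQ.
have EA : E * A = A * T by rewrite {1}HT !mulrA EAA.
have Ej : forall j, E ^+ j * A ^+ j.+1 = A.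
  elim=> [|j IH]; first by rewrite expr0 mul1r expr1.
  by rewrite exprSr -mulrA exprS exprS (mulrA E) (mulrA (E * A)) EAA -exprS IH.
have Am : forall j, exists U, A = A ^+ j.+1 * U.
  elim=> [|j [U HU]]; first by exists 1; rewrite expr1 mulr1.
  by exists (U * T); rewrite exprS -mulrA (mulrA (A ^+ j.+1)) -HU mulrA -HT.
have AMA : A ^+ m * M * A = A.
  have [U HU] := Am m.-1; rewrite prednK // in HU.
  by rewrite {2}HU mulrA HM -HU.
have -> : A * (E ^+ m.+1 * A ^+ m * (A ^+ m * M)) * A =
  A * E ^+ m.+1 * A ^+ m * (A ^+ m * M * A) by rewrite !mulrA.
rewrite AMA -(mulrA _ (A ^+ m) A) -exprSr.
have -> : A * E ^+ m.+1 * A ^+ m.+1 = A * E * (E ^+ m * A ^+ m.+1)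
  by rewrite exprS !mulrA.
by rewrite Ej -mulrA EA mulrA -HT.
Qed.

Theorem theorem4p14 (R : realType) (n : nat) (A : 'M[R[i]]_n) (m : nat)
  (E M : 'M[R[i]]_n) :
  (0 < m)%N ->
  is_coreEP A E ->
  is_MP (A ^+ m) M ->
  A *m weak_core E M A m *m A = A <-> (Ind A <= 1)%N.
Proof.
move=> m0 [HEAE HE _] [HM _ _ _].
rewrite /weak_core /WGm !mulmxE in HEAE HM *.
split.
- move=> H.
  move: HE; rewrite /colspace_eq => /andP[/col_sub [P HP] _].
  case Hk: (Ind A) HP => [|k] HP; first by [].
  have HA : A = A ^+ 2 * (A ^+ k * P * (E ^+ m * A ^+ m * (A ^+ m * M)) * A).
    rewrite -{1}H [E ^+ m.+1]exprS HP [A ^+ k.+1]exprS expr2 -!mulrA.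
    by [].
  have p1 : colspace_eq (A ^+ 1) (A ^+ 2).
    rewrite /colspace_eq; apply/andP; split.
      by rewrite expr1; apply: col_subW HA.
    by rewrite expr1 expr2; apply: (@col_subW _ _ _ _ A).
  by rewrite -Hk; apply: find_le1.
move=> Hind; move: A E M HEAE HM HE Hind.
case: n => [|n'] A E M HEAE HM HE Hind.
  by rewrite [LHS]flatmx0 [RHS]flatmx0.
move: Hind HE; rewrite /Ind => /find_le1_inv [[p0 ->]|[p1 ->]] /andP[_ HE].
  move: p0 => /andP[+ _]; rewrite expr0 expr1 => /col_sub [V HV].
  have [Q HQ] : exists Q, A = E * Q.
    apply: col_sub; apply: submx_trans HE.
    by rewrite expr0; apply: (@col_subW _ _ _ _ A); rewrite mul1r.
  have HT : A = A * A * V by rewrite -mulrA -HV mulr1.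
  have := @fwd ('M[R[i]]_n'.+1 : pzRingType) A E M Q V m m0 HEAE HM HQ HT. exact.
move: p1 => /andP[/col_sub [T HT] _].
move: HE; rewrite expr1 => /col_sub [Q HQ].
have HT' : A = A * A * T by rewrite -expr2 -HT expr1.
have := @fwd ('M[R[i]]_n'.+1 : pzRingType) A E M Q T m m0 HEAE HM HQ HT'. exact.
Qed.
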